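(* Let $\mathbb{K}\in\{\mathbb{R},\mathbb{C}\}$ and let $\mathcal{X}$ be a topological $\mathbb{K}$-vector space whose topological dual $\mathcal{X}^{\ast}$ separates the points of $\mathcal{X}$. Let $(K_j)_{j\in J}$ be a net of nonempty weak*-compact subsets of $\mathcal{X}^{\ast}$ which is increasing ($K_{j_1}\subseteq K_{j_2}$ whenever $j_1\prec j_2$) and such that $K:=\overline{\bigcup_{j\in J}K_j}$ (weak*-closure) is weak*-compact. Then $(K_j)_{j\in J}$ converges to $K$ in the weak*-Hausdorff hypertopology and $K=\overline{\mathrm{Li}_{j\in J}K_j}=\overline{\mathrm{Ls}_{j\in J}K_j}$. Moreover, if $\mathcal{X}$ is separable then $K=\mathrm{Li}_{j\in J}K_j=\mathrm{Ls}_{j\in J}K_j$, i.e. $K$ is the Kuratowski–Painlevé limit of $(K_j)_{j\in J}$.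
   Context: Topological vector spaces are Hausdorff. $\mathcal{X}^{\ast}$ carries the weak* topology; closures are weak*-closures. The weak*-Hausdorff hypertopology on nonempty weak*-closed subsets of $\mathcal{X}^{\ast}$ is generated by the extended pseudometrics $d_H^{(A)}(F,\tilde F)=\max\{\sup_{\sigma\in F}\inf_{\tilde\sigma\in\tilde F}|(\sigma-\tilde\sigma)(A)|,\ \sup_{\tilde\sigma\in\tilde F}\inf_{\sigma\in F}|(\sigma-\tilde\sigma)(A)|\}$, $A\in\mathcal{X}$. For a net $(F_j)_{j\in J}$ of subsets of $\mathcal{X}^{\ast}$: $\mathrm{Li}_{j\in J}F_j$ is the set of $\sigma\in\mathcal{X}^{\ast}$ that are weak* limits of a net $(\sigma_j)_{j\in J}$ with $\sigma_j\in F_j$ for all $j\succ j_0$, for some $j_0\in J$; $\mathrm{Ls}_{j\in J}F_j$ is the set of $\sigma\in\mathcal{X}^{\ast}$ for which there are a subnet $(F_{s(i)})_{i\in I}$ and a net $(\sigma_i)_{i\in I}$ converging weak* to $\sigma$ with $\sigma_i\in F_{s(i)}$ for all $i\in I$. *)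

(* Defs.v *)
From HB Require Import structures.
From mathcomp Require Import all_boot all_order all_algebra.
From mathcomp Require Import all_classical all_reals all_analysis.

Set Implicit Arguments.
Unset Strict Implicit.
Unset Printing Implicit Defensive.

Import Order.TTheory GRing.Theory Num.Theory.
Import numFieldTopology.Exports.

Local Open Scope classical_set_scope.
Local Open Scope ring_scope.

Definition directed_set (J : Type) (le : J -> J -> Prop) : Prop :=
  inhabited J /\
  (forall j, le j j) /\
  (forall a b c, le a b -> le b c -> le a c) /\
  (forall a b, exists c, le a c /\ le b c).

Definition net_cvg (T : topologicalType) (J : Type) (le : J -> J -> Prop)
    (s : J -> T) (x : T) : Prop :=
  forall U, nbhs x U -> exists j0, forall j, le j0 j -> U (s j).

Section Dual.
Variables (K : numFieldType) (X : topologicalLmodType K).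

(* The weak* topology on X^* is the topology of pointwise convergence,
   i.e. the subspace topology induced by the product topology on
   functions X -> K. *)
Definition wstar := {ptws X -> K^o}.

Definition dual : set wstar :=
  [set f | (forall (a : K) (x y : X), f (a *: x + y) = a * f x + f y)
           /\ continuous (f : X -> K^o)].

Definition dual_separates_points : Prop :=
  forall x y : X, x <> y -> exists2 f, dual f & f x <> f y.

Definition separable_space : Prop :=
  exists D : set X, countable D /\ closure D = [set: X].

Definition wclosure (S : set wstar) : set wstar := closure S `&` dual.

Variables (J : Type) (le : J -> J -> Prop) (F : J -> set wstar).

Definition Li : set wstar :=
  [set s | dual s /\
     exists sig : J -> wstar,
       (forall j, dual (sig j)) /\
       (exists j0, forall j, le j0 j -> F j (sig j)) /\
       net_cvg le sig s].

(* Kuratowski-Painleve upper limit; subnets in the sense of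
   "s(i) eventually above every j0". *)
Definition Ls : set wstar :=
  [set s | dual s /\
     exists (I : Type) (leI : I -> I -> Prop) (sub : I -> J) (sig : I -> wstar),
       directed_set leI /\
       (forall j0, exists i0, forall i, leI i0 i -> le j0 (sub i)) /\
       (forall i, dual (sig i)) /\
       (forall i, F (sub i) (sig i)) /\
       net_cvg leI sig s].

End Dual.
Arguments dual {K} X.
Arguments wclosure {K X}.
Arguments Li {K X J}.
Arguments Ls {K X J}.
Arguments dual_separates_points {K} X.
Arguments separable_space {K} X.

Section Hausdorff.
Variables (R : realType) (K : numFieldType) (abs : K -> R).
Variable (X : topologicalLmodType K).
Local Open Scope ereal_scope.

Definition hdist (A : X) (F G : set (wstar X)) : \bar R :=
  maxe (ereal_sup [set ereal_inf [set (abs (s A - t A))%:E | t in G] | s in F])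
       (ereal_sup [set ereal_inf [set (abs (s A - t A))%:E | s in F] | t in G]).

(* Convergence of a net of sets in the weak*-Hausdorff hypertopology:
   convergence with respect to every generating pseudometric. *)
Definition whaus_cvg (J : Type) (le : J -> J -> Prop)
    (F : J -> set (wstar X)) (G : set (wstar X)) : Prop :=
  forall (A : X) (eps : R), (0 < eps)%R ->
    exists j0, forall j, le j0 j -> hdist A (F j) G < eps%:E.

End Hausdorff.

(* The statement of Proposition 3.14 for a fixed scalar field K whose
   modulus is abs : K -> R. *)
Definition prop3p14_for (R : realType) (K : numFieldType) (abs : K -> R) : Prop :=
  forall (X : topologicalLmodType K),
    hausdorff_space X ->
    dual_separates_points X ->
  forall (J : Type) (le : J -> J -> Prop) (Kj : J -> set (wstar X)),
    directed_set le ->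
    (forall j, Kj j !=set0 /\ Kj j `<=` dual X /\ compact (Kj j)) ->
    (forall j1 j2, le j1 j2 -> Kj j1 `<=` Kj j2) ->
    compact (wclosure (\bigcup_j Kj j)) ->
    let Klim := wclosure (\bigcup_j Kj j) in
    [/\ whaus_cvg abs le Kj Klim,
        Klim = wclosure (Li le Kj),
        Klim = wclosure (Ls le Kj) &
        (separable_space X -> Klim = Li le Kj /\ Klim = Ls le Kj)].

(* Main.v *)
Require Import Defs.
From HB Require Import structures.
From mathcomp Require Import all_boot all_order all_algebra.
From mathcomp Require Import all_classical all_reals all_analysis.
From mathcomp Require Import complex lra.
Import numFieldTopology.Exports.
Import Order.TTheory GRing.Theory Num.Theory.
Local Open Scope classical_set_scope.
Local Open Scope ring_scope.

Section Gen.
Variables (K : numFieldType) (X : topologicalLmodType K).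
Local Notation W := (wstar X).

Definition ev (g : W) (A : X) : K := g A.

Lemma eval_cont (A : X) : continuous (fun g : W => (g A : K^o)).
Proof. exact: (@proj_continuous X (fun _ => K^o) A). Qed.

Lemma ballK (x y : K^o) (e : K) : ball x e y = (`|(x : K) - y| < e).
Proof. rewrite /ball /=. reflexivity. Qed.

Lemma nbhs_eval (g : W) (A : X) (e : K) : 0 < e ->
  nbhs g [set u : W | `|ev g A - ev u A| < e].
Proof.
move=> e0.
have hb : nbhs (g A : K^o) (ball (g A : K^o) e) by exact: nbhsx_ballx.
have h2 := eval_cont A g _ hb.
have h3 : nbhs g ((fun u : W => (u A : K^o)) @^-1` ball (g A : K^o) e) := h2.
apply: (filterS _ h3) => u /=.
rewrite ballK.
done.
Qed.
Lemma open_eval (c : K) (A : X) (e : K) : open [set u : W | `|c - ev u A| < e].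
Proof.
have -> : [set u : W | `|c - ev u A| < e] =
    (fun g : W => (g A : K^o)) @^-1` (ball (c : K^o) e).
  by apply/seteqP; split => u /=; rewrite ballK.
apply: open_comp; last exact: ball_open.
by move=> g _; exact: eval_cont.
Qed.

Lemma ptws_cvg (F : set_system W) (f : W) : Filter F ->
  (forall A : X, (fun g : W => (g A : K^o)) @ F --> (f A : K^o)) -> F --> f.
Proof.
move=> FF H.
apply/(@cvg_sup _ _ _ F f FF) => i.
move=> B /=.
move=> [V [Vop Vx] VB].
case: Vop => A0 A0op eO.
have hA : nbhs (f i : K^o) A0.
  by apply: open_nbhs_nbhs; split => //; rewrite -eO in Vx.
have := H i A0 hA.
rewrite nbhs_filterE /=.
apply: filterS => g /= Ag; apply: VB; rewrite -eO; exact: Ag.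
Qed.

Variables (J : Type) (le : J -> J -> Prop) (Kj : J -> set W).
Hypotheses (hdir : directed_set le)
  (hK : forall j, Kj j !=set0 /\ Kj j `<=` dual X /\ compact (Kj j))
  (hmono : forall j1 j2, le j1 j2 -> Kj j1 `<=` Kj j2).
Local Notation U := (\bigcup_j Kj j).

Lemma U_Li : U `<=` Li le Kj.
Proof.
move=> s [j0 _ hs]; split; first exact: (proj1 (proj2 (hK j0))).
exists (fun _ => s); split; first by move=> _; exact: (proj1 (proj2 (hK j0))).
split; first by exists j0 => j /hmono; apply.
move=> B /nbhs_singleton Bs; exists j0 => //.
Qed.

Lemma Li_Ls : Li le Kj `<=` Ls le Kj.
Proof.
move=> s [ds [sig [dsig [[j0 hj0] cvs]]]]; split => //.
have [_ [hrefl [htr hub]]] := hdir.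
pose sub (i : J) : J := proj1_sig (cid (hub j0 i)).
have sub1 i : le j0 (sub i) by rewrite /sub; case: cid => c [].
have sub2 i : le i (sub i) by rewrite /sub; case: cid => c [].
exists J, le, sub, (fun i => sig (sub i)); split => //; split.
  by move=> j1; exists j1 => i hi; apply: htr hi (sub2 i).
split; first by move=> i; exact: dsig.
split; first by move=> i; exact: hj0.
move=> B /cvs [j1 hj1]; exists j1 => i hi; apply: hj1; exact: htr hi (sub2 i).
Qed.

Lemma Ls_cl : Ls le Kj `<=` closure U.
Proof.
move=> s [ds [I [leI [sub [sig [[[i0] [hrefl _]] [_ [_ [hsig cvs]]]]]]]]] B /cvs.
move=> [i1 hi1]; exists (sig i1); split; last by apply: hi1; exact: hrefl.
by exists (sub i1).
Qed.

Lemma U_K : U `<=` wclosure U.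
Proof.
move=> s Us; split; first exact: subset_closure.
by case: Us => j _ /(proj1 (proj2 (hK j))).
Qed.

Lemma wclosure_eq (S : set W) : U `<=` S -> S `<=` wclosure U ->
  wclosure U = wclosure S.
Proof.
move=> US SK; apply/seteqP; split.
  by move=> x [clx dx]; split => //; exact: (closure_subset US clx).
move=> x [clx dx]; split => //.
have SU : S `<=` closure U by move=> y /SK [].
have := closure_subset SU clx.
by rewrite -(proj1 (closure_id _) (@closed_closure _ U)).
Qed.

Lemma Ls_K : Ls le Kj `<=` wclosure U.
Proof. by move=> s hs; split; [exact: Ls_cl | case: hs]. Qed.

Lemma Li_K : Li le Kj `<=` wclosure U.
Proof. by move=> s /Li_Ls /Ls_K. Qed.

Definition Fev : set_system J := [set S | exists j0, forall j, le j0 j -> S j].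

Lemma Fev_filter : Filter Fev.
Proof.
have [[j00] [_ [htr hub]]] := hdir.
apply: Build_Filter; first by exists j00.
  move=> P Q [j1 h1] [j2 h2]; have [c [hc1 hc2]] := hub j1 j2.
  by exists c => j hj; split; [apply: h1; exact: htr hc1 hj|apply: h2; exact: htr hc2 hj].
by move=> P Q PQ [j1 h1]; exists j1 => j /h1 /PQ.
Qed.

Section Haus.
Variables (R : realType) (abs : K -> R).
Hypothesis habs : forall eps : R, 0 < eps ->
  exists2 d : K, 0 < d & forall z : K, `|z| < d -> abs z < eps.

Lemma haus_cvg : compact (wclosure U) -> whaus_cvg abs le Kj (wclosure U).
Proof.
move=> cK A eps eps0.
have eps20 : 0 < eps / 2 by rewrite divr_gt0.
have [d d0 hd] := habs _ eps20.
have d20 : 0 < d / 2 by rewrite divr_gt0.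
have := (proj1 (compact_near_coveringP _) cK J Fev
  (fun j u => exists2 s, Kj j s & `|ev s A - ev u A| < d) Fev_filter).
case.
  move=> t [clt _].
  have [s [[j1 _ Ks] hs]] := clt _ (nbhs_eval t A _ d20).
  exists ([set u : W | `|ev t A - ev u A| < d / 2], [set j | le j1 j]).
    split; first exact: nbhs_eval.
    by exists j1.
  move=> [u j] [/= hu hj]; exists s; first exact: (hmono j1 j hj s Ks).
  rewrite (splitr d); apply: le_lt_trans (ler_distD (ev t A) _ _) _.
  by rewrite ltrD // distrC.
move=> j0 hj0.
exists j0 => j hj.
rewrite /hdist.
apply: (@le_lt_trans _ _ ((eps/2)%:E)); last by rewrite lte_fin; lra.
rewrite ge_max; apply/andP; split.
- apply: ge_ereal_sup => _ [s Ks <-].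
  apply: (@le_trans _ _ (abs (ev s A - ev s A))%:E).
    apply: ereal_inf_lbound; exists s => //.
    by apply: U_K; exists j.
  rewrite lee_fin subrr; apply/ltW/hd; rewrite normr0.
  done.
- apply: ge_ereal_sup => _ [t Kt <-].
  have [s Ds hs] := hj0 j hj t Kt.
  apply: (@le_trans _ _ (abs (ev s A - ev t A))%:E).
    by apply: ereal_inf_lbound; exists s.
  by rewrite lee_fin; apply/ltW/hd.
Qed.
End Haus.

Section Sep.
Hypothesis harch : forall r : K, 0 < r -> exists n : nat, n.+1%:R^-1 < r.

Lemma invS_gt0 n : 0 < (n.+1%:R^-1 : K).
Proof. by rewrite invr_gt0 ltr0Sn. Qed.

Lemma invS_le (n m : nat) : (n <= m)%N -> (m.+1%:R^-1 : K) <= n.+1%:R^-1.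
Proof. by move=> h; rewrite lef_pV2 ?posrE ?ltr0Sn // ler_nat ltnS. Qed.

Variables (D : set X) (g : X -> nat) (sg : W).
Hypotheses (hD : closure D = [set: X]) (hg : {in D &, injective g})
  (dsg : dual X sg).

Definition Un n := [set u : W | forall d, D d -> (g d <= n)%N ->
  `|ev sg d - ev u d| < n.+1%:R^-1].

Lemma Un_dec n m : (n <= m)%N -> Un m `<=` Un n.
Proof.
move=> nm u hu d Dd gd.
have h := hu d Dd (leq_trans gd nm).
apply: (lt_le_trans h).
exact: invS_le.
Qed.

Lemma Un_nbhs n : nbhs sg (Un n).
Proof.
suff H : forall m e, 0 < e -> nbhs sg [set u : W | forall d, D d ->
    (g d <= m)%N -> `|ev sg d - ev u d| < e].
  exact: H _ _ (invS_gt0 n).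
have H1 : forall k e, 0 < e -> nbhs sg [set u : W | forall d, D d ->
    g d = k -> `|ev sg d - ev u d| < e].
  move=> k e e0; have [[d0 [Dd0 gd0]]|nd] := pselect (exists d0, D d0 /\ g d0 = k).
    apply: filterS (nbhs_eval sg d0 _ e0) => u hu d Dd gd.
    have -> : d = d0 by apply: hg; rewrite ?inE // gd gd0.
    exact: hu.
  apply: (@filterS _ _ _ setT); last exact: filterT.
  by move=> u _ d Dd gd; exfalso; apply: nd; exists d.
elim=> [|m IH] e e0.
  apply: filterS (H1 0%N e e0) => u hu d Dd; rewrite leqn0 => /eqP; exact: hu d Dd.
apply: filterS (filterI (IH e e0) (H1 m.+1 e e0)) => u [hu1 hu2] d Dd.
rewrite leq_eqVlt ltnS => /orP [/eqP gd | gd]; [exact: hu2 | exact: hu1].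
Qed.

Lemma dense_eq (c : W) : dual X c -> (forall d, D d -> ev c d = ev sg d) -> c = sg.
Proof.
move=> dc hcd; apply: funext => x.
case: (eqVneq (ev c x) (ev sg x)) => // hne; exfalso.
have r0 : 0 < `|ev c x - ev sg x| by rewrite normr_gt0 subr_eq0.
set r := `|ev c x - ev sg x| in r0.
have r20 : 0 < r / 2 by rewrite divr_gt0.
have hc0 := (proj2 dc) x _ (nbhsx_ballx (c x : K^o) (r/2) r20).
have hs0 := (proj2 dsg) x _ (nbhsx_ballx (sg x : K^o) (r/2) r20).
have hc : nbhs x ((c : X -> K^o) @^-1` ball (c x : K^o) (r/2)) := hc0.
have hs : nbhs x ((sg : X -> K^o) @^-1` ball (sg x : K^o) (r/2)) := hs0.
have : closure D x by rewrite hD.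
move=> /(_ _ (filterI hc hs)) [d [Dd [hcd' hsd']]].
move: hcd' hsd'; rewrite /= !ballK => h1 h2.
have : r < r.
  rewrite {2}(splitr r) /r.
  apply: le_lt_trans (ler_distD (ev c d) _ _) _.
  rewrite ltrD //; rewrite hcd //; rewrite distrC; exact: h2.
by rewrite ltxx.
Qed.

Lemma CL (C : set W) : compact C -> C `<=` dual X ->
  (forall n, C `&` Un n !=set0) -> C sg.
Proof.
move=> cC Cd hC.
pose G := [set S : set W | exists n, C `&` Un n `<=` S].
have PG : ProperFilter G.
  apply: Build_ProperFilter.
    by move=> [n hn]; have [u hu] := hC n; exact: hn u hu.
  apply: Build_Filter; first by exists 0%N.
    move=> P Q [n1 h1] [n2 h2]; exists (maxn n1 n2) => u [Cu Uu]; split.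
      by apply: h1; split => //; exact: Un_dec (leq_maxl _ _) _ Uu.
    by apply: h2; split => //; exact: Un_dec (leq_maxr _ _) _ Uu.
  by move=> P Q PQ [n h]; exists n => u /h /PQ.
have GC : G C by exists 0%N => u [].
have [c [Cc clc]] := cC G PG GC.
suff <- : c = sg by [].
apply: dense_eq (Cd _ Cc) _ => d Dd.
case: (eqVneq (ev c d) (ev sg d)) => // hne; exfalso.
have r0 : 0 < `|ev sg d - ev c d| by rewrite normr_gt0 subr_eq0 eq_sym.
set r := `|ev sg d - ev c d| in r0.
have r20 : 0 < r / 2 by rewrite divr_gt0.
have [n0 hn0] := harch _ r20.
pose N := maxn n0 (g d).
have hNn : (N.+1%:R^-1 : K) < r / 2.
  apply: (le_lt_trans _ hn0); exact: invS_le (leq_maxl _ _).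
have := clc (C `&` Un N) [set v | `|ev c d - ev v d| < N.+1%:R^-1] _
  (nbhs_eval c d _ (invS_gt0 N)).
  move=> /(_ _) [|v [[Cv Uv] hv]]; first by exists N.
have h1 := Uv d Dd (leq_maxr _ _).
have : r < r.
  rewrite {2}(splitr r) /r.
  apply: le_lt_trans (ler_distD (ev v d) _ _) _.
  rewrite ltrD //; first exact: lt_trans h1 hNn.
  by rewrite distrC; exact: lt_trans hv hNn.
by rewrite ltxx.
Qed.

Lemma KL {Kl : set W} : compact Kl -> Kl `<=` dual X ->
  forall x e, 0 < e -> exists n, forall u, Kl u -> Un n u -> `|ev sg x - ev u x| < e.
Proof.
move=> cK Kd x e e0.
apply: contrapT => hno.
pose C := Kl `&` [set u : W | ~ (`|ev sg x - ev u x| < e)].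
have cC : compact C.
  apply: compact_closedI cK _.
  have -> : [set u : W | ~ (`|ev sg x - ev u x| < e)] =
    ~` [set u : W | `|ev sg x - ev u x| < e] by [].
  rewrite closedC; exact: open_eval.
have : C sg.
  apply: CL cC (fun u Cu => Kd _ (proj1 Cu)) _ => n.
  apply: contrapT => h; apply: hno; exists n => u Ku Uu.
  apply: contrapT => hu; apply: h; exists u; split => //.
by case => _; apply; rewrite subrr normr0.
Qed.

Lemma sep_Li : compact (wclosure U) -> wclosure U sg -> Li le Kj sg.
Proof.
move=> cK Ksg.
have [[j00] [hrefl [htr hub]]] := hdir.
have Kd : wclosure U `<=` dual X by move=> u [].
have hsel : forall j, exists s, Kj j s /\
    (forall n, (Kj j `&` Un n) !=set0 -> Un n s).
  move=> j.
  have [Kjs|nKjs] := pselect (Kj j sg).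
    exists sg; split => // n _ d _ _; rewrite subrr normr0; exact: invS_gt0.
  have [n0 hn0] : exists n, ~ (Kj j `&` Un n !=set0).
    apply: contrapT => h; apply: nKjs; apply: CL.
    - exact: (proj2 (proj2 (hK j))).
    - exact: (proj1 (proj2 (hK j))).
    - move=> n; apply: contrapT => h2; apply: h; exists n; exact: h2.
  pose P := fun n => `[< ~ (Kj j `&` Un n !=set0) >].
  have exP : exists n, P n by exists n0; apply/asboolP.
  case: (ex_minnP exP) => N /asboolP hN hmin.
  case: N hN hmin => [|N] hN hmin.
    have [s Ks] := proj1 (hK j); exists s; split => // n [u [Ku Uu]].
    by exfalso; apply: hN; exists u; split => //; exact: Un_dec (leq0n n) _ Uu.
  have : (Kj j `&` Un N) !=set0.
    apply: contrapT => h; have := hmin N (introT (asboolP _) h).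
    by rewrite ltnn.
  move=> [s [Ks Us]]; exists s; split => // n [u [Ku Uu]].
  apply: Un_dec _ _ Us.
  case: (leqP n N) => // hnN; exfalso; apply: hN; exists u; split => //.
  exact: Un_dec hnN _ Uu.
pose sig j := proj1_sig (cid (hsel j)).
have sigK j : Kj j (sig j) /\ (forall n, (Kj j `&` Un n) !=set0 -> Un n (sig j)).
  exact: proj2_sig (cid (hsel j)).
split; first by case: Ksg.
exists sig; split.
  by move=> j; apply: (proj1 (proj2 (hK j))); exact: (sigK j).1.
split; first by exists j00 => j _; exact: (sigK j).1.
move=> B hB.
have FF : Filter (sig @ Fev) := fmap_filter sig Fev_filter.
have Hc : (sig @ Fev) --> sg.
  apply: ptws_cvg => x B' hB'.
  have [e /= e0 he] := (proj1 (nbhs_ballP _ _)) hB'.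
  have [n hn] := KL cK Kd x e e0.
  have [s1 [[j1 _ Ks1] Us1]] := (proj1 Ksg) _ (Un_nbhs n).
  exists j1 => j hj.
  apply: he; rewrite ballK.
  apply: hn.
    by apply: U_K; exists j => //; exact: (sigK j).1.
  apply: (sigK j).2; exists s1; split => //.
  exact: hmono j1 j hj s1 Ks1.
exact: Hc B hB.
Qed.

End Sep.

End Gen.

Lemma gen_main (R : realType) (K : numFieldType) (abs : K -> R)
  (harch : forall r : K, 0 < r -> exists n : nat, n.+1%:R^-1 < r)
  (habs : forall eps : R, 0 < eps ->
     exists2 d : K, 0 < d & forall z : K, `|z| < d -> abs z < eps) :
  prop3p14_for abs.
Proof.
move=> X _ _ J le Kj hdir hK hmono cK Klim; rewrite /Klim.
have ULi : \bigcup_j Kj j `<=` Li le Kj by apply: U_Li.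
have LiLs : Li le Kj `<=` Ls le Kj by apply: Li_Ls.
have LsK : Ls le Kj `<=` wclosure (\bigcup_j Kj j) by apply: Ls_K.
have LiK : Li le Kj `<=` wclosure (\bigcup_j Kj j) by move=> s /LiLs /LsK.
split.
- by apply: haus_cvg.
- by apply: wclosure_eq.
- apply: wclosure_eq => //.
  by move=> s /ULi /LiLs.
- move=> [D [cD hD]]; have /countable_injP [gi hgi] := cD.
  have sub : wclosure (\bigcup_j Kj j) `<=` Li le Kj.
    move=> s Ks; apply: (@sep_Li _ _ _ _ _ hdir hK hmono harch D gi s hD hgi _ cK Ks).
    by case: Ks.
  split; apply/seteqP; split.
  + exact: sub.
  + exact: LiK.
  + by move=> s /sub /LiLs.
  + exact: LsK.
Qed.

Lemma arch_real (R : realType) (r : R) : 0 < r -> exists n : nat, n.+1%:R^-1 < r.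
Proof.
move=> r0; have h := truncnS_gt (r^-1).
exists (Num.Def.trunc r^-1).
by rewrite -[X in _ < X](invrK r) ltf_pV2 ?posrE ?invr_gt0 ?ltr0Sn.
Qed.

Lemma arch_cplx (R : realType) (r : R[i]) : 0 < r -> exists n : nat, n.+1%:R^-1 < r.
Proof.
rewrite ltcE /= => /andP [/eqP hi hr].
have [n hn] := @arch_real _ _ hr.
exists n.
have e : (n.+1%:R^-1 : R[i]) = ((n.+1%:R^-1)%:C)%C.
  by rewrite rmorphV ?rmorph_nat // unitfE pnatr_eq0.
rewrite e ltcE /= hn andbT.
by case: r hi {hr hn} => a b /= ->.
Qed.

Theorem proposition3p14 (R : realType) :
  prop3p14_for (fun x : R => `|x|) /\
  prop3p14_for (fun z : complex.complex R => complex.Re `|z|).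
Proof.
split.
- apply: gen_main; first exact: arch_real.
  by move=> eps eps0; exists eps.
- apply: gen_main; first exact: arch_cplx.
  move=> eps eps0; exists (eps%:C)%C.
    by rewrite ltcE /= eqxx eps0.
  by move=> z; rewrite ltcE /= => /andP [_ h].
Qed.
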